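(* Consider $n$ users forming a clique with uniform weights, i.e., $\phi(x_i;x_{-i})=\frac1n\sum_{j=1}^n x_j$ for every $i$. Then for any dimension $\ell$, any features $x_1,\dots,x_n\in\mathbb{R}^\ell$, and any linear classifier $h(x_i;x_{-i})=\mathrm{sign}(\theta^\top\phi(x_i;x_{-i})+b)$, under the myopic best-response dynamics described below either (i) all $n$ users move in the first round, or (ii) none of the users move at all.
   Context: $\mathrm{sign}(0)=+1$. Cost $c(x,x')=\|x-x'\|_2$. Dynamics: $x_i^{(0)}=x_i$; at each round $t\ge1$ all users update concurrently; user $i$ changes her features only if she is currently classified $-1$ and some $x'$ with $h(x';x^{(t-1)}_{-i})=+1$ has $c(x_i^{(t-1)},x')\le2$, in which case she moves to the minimum-cost such point (embedding exactly on the boundary $\theta^\top\phi+b=0$); otherwise she stays. User $i$ ''moves at round $t$'' if $x_i^{(t)}\neq x_i^{(t-1)}$. *)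

(* Defs.v *)
From HB Require Import structures.
From mathcomp Require Import all_boot all_order all_algebra.
From mathcomp Require Import reals.
Set Implicit Arguments. Unset Strict Implicit. Unset Printing Implicit Defensive.
Import Order.TTheory GRing.Theory Num.Theory.
Local Open Scope ring_scope.

Definition vec (R : realType) (l : nat) := 'rV[R]_l.

Definition dot (R : realType) (l : nat) (u v : vec R l) : R :=
  \sum_(k < l) u ord0 k * v ord0 k.

Definition norm2 (R : realType) (l : nat) (u : vec R l) : R := Num.sqrt (dot u u).
Definition cost (R : realType) (l : nat) (x x' : vec R l) : R := norm2 (x - x').

Definition profile (R : realType) (l n : nat) := 'I_n -> vec R l.

Definition replace (R : realType) (l n : nat) (x : profile R l n) (i : 'I_n)
  (x' : vec R l) : profile R l n := fun j => if j == i then x' else x j.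

Definition phi (R : realType) (l n : nat) (x : profile R l n) (i : 'I_n) : vec R l :=
  (n%:R)^-1 *: \sum_(j < n) x j.

(* sign with sign(0) = +1 *)
Definition sgn (R : realType) (r : R) : int := if 0 <= r then 1%R else (-1)%R.

Definition h (R : realType) (l n : nat) (theta : vec R l) (b : R)
  (x : profile R l n) (i : 'I_n) : int := sgn (dot theta (phi x i) + b).

Definition can_move (R : realType) (l n : nat) (theta : vec R l) (b : R)
  (x : profile R l n) (i : 'I_n) : Prop :=
  h theta b x i = (-1)%R /\
  exists x' : vec R l, h theta b (replace x i x') i = 1%R /\ cost (x i) x' <= 2.

Definition min_cost_move (R : realType) (l n : nat) (theta : vec R l) (b : R)
  (x : profile R l n) (i : 'I_n) (x' : vec R l) : Prop :=
  h theta b (replace x i x') i = 1%R /\ cost (x i) x' <= 2 /\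
  forall z : vec R l, h theta b (replace x i z) i = 1%R -> cost (x i) z <= 2 ->
    cost (x i) x' <= cost (x i) z.

Definition br_step (R : realType) (l n : nat) (theta : vec R l) (b : R)
  (x y : profile R l n) : Prop :=
  forall i : 'I_n,
    (can_move theta b x i -> min_cost_move theta b x i (y i)) /\
    (~ can_move theta b x i -> y i = x i).

(* Main.v *)
Require Import Defs.
From HB Require Import structures.
From mathcomp Require Import all_boot all_order all_algebra.
From mathcomp Require Import reals.
From Stdlib Require Import Classical.
Import Order.TTheory GRing.Theory Num.Theory.
Local Open Scope ring_scope.

Lemma dotD (R : realType) (l : nat) (u v w : vec R l) :
  dot u (v + w) = dot u v + dot u w.
Proof. by rewrite /dot -big_split; apply: eq_bigr => k _; rewrite mxE mulrDr. Qed.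

Lemma sum_replace (R : realType) (l n : nat) (x : profile R l n) i w :
  \sum_(j < n) replace x i w j = \sum_(j < n) x j + (w - x i).
Proof.
rewrite (bigD1 i) //= (bigD1 i (P := predT)) //= /replace eqxx.
rewrite (eq_bigr (fun j => x j)); last by move=> j /negbTE ->.
by rewrite addrC (addrC (x i)) -addrA; congr (_ + _); rewrite addrC addrNK.
Qed.

Lemma transfer {R : realType} {l n : nat} {theta : vec R l} {b : R}
  {x x' : profile R l n} {i j} :
  \sum_(k < n) x k = \sum_(k < n) x' k ->
  can_move theta b x i -> can_move theta b x' j.
Proof.
move=> hs [hneg [z [hz cz]]]; split.
  by move: hneg; rewrite /h /phi hs.
exists (x' j + (z - x i)); split.
  move: hz; rewrite /h /phi !sum_replace hs.
  by rewrite (addrC (x' j)) addrK.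
by move: cz; rewrite /cost opprD addrA subrr add0r opprB.
Qed.

Theorem proposition6 (R : realType) (l n : nat) (hn : (0 < n)%N)
  (theta : vec R l) (b : R) (x0 : profile R l n)
  (X : nat -> profile R l n) (hX0 : X 0%N = x0)
  (hstep : forall t : nat, br_step theta b (X t) (X t.+1)) :
  (forall i : 'I_n, X 1%N i <> X 0%N i) \/
  (forall (t : nat) (i : 'I_n), X t.+1 i = X t i).
Proof.
pose i0 := Ordinal hn.
case: (classic (can_move theta b (X 0%N) i0)) => hc.
  left => i heq.
  have hci : can_move theta b (X 0%N) i by exact: (transfer (erefl _) hc).
  have [h1 _ ] := (hstep 0%N i).1 hci.
  move: h1; rewrite heq /h /phi sum_replace subrr addr0.
  case: hci; rewrite /h /phi => -> _; by move/eqP.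
have hall : forall t, \sum_(k < n) X t k = \sum_(k < n) X 0%N k /\
    forall i, X t.+1 i = X t i.
  elim=> [|t [IH1 IH2]].
    split => // i; apply: (hstep 0%N i).2 => hci.
    by apply: hc; exact: (transfer (erefl _) hci).
  have hs : \sum_(k < n) X t.+1 k = \sum_(k < n) X 0%N k.
    by rewrite -IH1; apply: eq_bigr => k _; rewrite IH2.
  split => // i; apply: (hstep t.+1 i).2 => hci.
  by apply: hc; exact: (transfer hs hci).
by right => t i; case: (hall t).
Qed.
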